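(* Assume the Morris–Sinclair mixing bound: for every $\alpha>0$ there is a constant $C_\alpha$ such that for all $n$, $\vec a$, $b$, the chain $P_{\rm Kna}$ satisfies $\tau(1/4)\le C_\alpha n^{9/2+\alpha}$. Then for every $\alpha>0$ there is a constant $C'_\alpha$ such that, for the SRT router model and for the billiard router model corresponding to $P_{\rm Kna}$ (for any $n,\vec a,b$ and any initial configuration), $\left|\chi^{(T)}_w-\mu^{(T)}_w\right|\le C'_\alpha n^{11/2+\alpha}$ for all $w\in\Omega_{\rm Kna}$ and $T\ge0$.
   Context: Given $\vec a\in\mathbb{Z}_{>0}^n$ and $b\in\mathbb{Z}_{>0}$, $\Omega_{\rm Kna}=\{\vec x\in\{0,1\}^n:\sum_i a_ix_i\le b\}$, $\mathcal N_{\rm Kna}(\vec x)=\{\vec y\in\Omega_{\rm Kna}:\|\vec x-\vec y\|_1=1\}$, and $P_{\rm Kna}(\vec x,\vec y)=1/(2n)$ if $\vec y\in\mathcal N_{\rm Kna}(\vec x)$, $1-|\mathcal N_{\rm Kna}(\vec x)|/(2n)$ if $\vec y=\vec x$, and $0$ otherwise; it is symmetric, ergodic, with uniform stationary distribution. For a stochastic matrix $P$ on a finite set $V$ with stationary distribution $\pi$: $\mathcal N(v)=\{u:P_{v,u}>0\}$; $d_{TV}(\xi,\zeta)=\frac12\|\xi-\zeta\|_1$; $\tau(\varepsilon)=\max_v\min\{t\ge0:d_{TV}(P^t_{v,\cdot},\pi)\le\varepsilon\}$. A functional-router model consists of $\sigma_v:\mathbb{Z}_{\ge0}\to\mathcal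 N(v)$; $I_{v,u}[z,z')=|\{j\in\{z,\dots,z'-1\}:\sigma_v(j)=u\}|$; given $\chi^{(0)}\in\mathbb{Z}_{\ge0}^V$, $Z^{(t)}_{v,u}=I_{v,u}\big[\sum_{s<t}\chi^{(s)}_v,\sum_{s\le t}\chi^{(s)}_v\big)$, $\chi^{(t+1)}_u=\sum_vZ^{(t)}_{v,u}$, $\mu^{(t)}=\chi^{(0)}P^t$. SRT router: with $T_i(v)=\{u\in\mathcal N(v):I_{v,u}[0,i)-(i+1)P_{v,u}<0\}$, $\sigma_v(i)$ is some $u\in T_i(v)$ minimizing $(I_{v,u}[0,i)+1)/P_{v,u}$. Billiard router: $\sigma_v(i)$ is some $u\in\mathcal N(v)$ minimizing $(I_{v,u}[0,i)+1)/P_{v,u}$. (Known: for the SRT router $|I_{v,u}[0,z)-zP_{v,u}|<1$ for all $z>0$; for the billiard router $|I_{v,u}[z,z')-(z'-z)P_{v,u}|\le1+(|\mathcal N(v)|-2)P_{v,u}$ for $z'>z$.) *)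

(* Defs.v *)
From Stdlib Require Import Reals.
From mathcomp Require Import all_boot.

Set Implicit Arguments.
Unset Strict Implicit.
Unset Printing Implicit Defensive.
Local Open Scope R_scope.

Definition rsum (V : finType) (f : V -> R) : R := \big[Rplus/R0]_(x : V) f x.

Section Markov.
Variable V : finType.
Variable P : V -> V -> R.

Fixpoint Ppow (t : nat) : V -> V -> R :=
  match t with
  | O => fun v u => if v == u then R1 else R0
  | S t' => fun v u => rsum (fun w => (Ppow t' v w * P w u))
  end.

Definition dTV (xi zeta : V -> R) : R :=
  (/ 2 * rsum (fun v => Rabs (xi v - zeta v))).

(* "tau(eps) <= B", where tau(eps) = max_v min { t >= 0 : d_TV(P^t_{v,.}, pi) <= eps }.
   This is literally the unfolding: the max over v is <= B iff for every v
   the minimum (which exists iff the set is nonempty) is <= B, iff for every v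
   some t <= B belongs to the set. *)
Definition mixing_time_le (pi : V -> R) (eps B : R) : Prop :=
  forall v : V, exists t : nat, (INR t <= B) /\ (dTV (Ppow t v) pi <= eps).

Definition nbr (v u : V) : Prop := (0 < P v u).

Definition Icount (sigma : V -> nat -> V) (v u : V) (z z' : nat) : nat :=
  count (fun j => sigma v j == u) (iota z (z' - z)).

(* One step of the functional-router model; the state is the pair
   (cumulative load sum_{s<t} chi^(s), current load chi^(t)). *)
Definition router_step (sigma : V -> nat -> V)
    (st : (V -> nat) * (V -> nat)) : (V -> nat) * (V -> nat) :=
  let: (cum, cur) := st in
  (fun v => cum v + cur v,
   fun u => \sum_(v : V) Icount sigma v u (cum v) (cum v + cur v))%N.

Definition chi (sigma : V -> nat -> V) (chi0 : V -> nat) (t : nat) : V -> nat :=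
  (iter t (router_step sigma) (fun _ => 0%N, chi0)).2.

Definition mu (chi0 : V -> nat) (t : nat) (w : V) : R :=
  rsum (fun v => (INR (chi0 v) * Ppow t v w)).

Definition in_T (sigma : V -> nat -> V) (v : V) (i : nat) (u : V) : Prop :=
  nbr v u /\ (INR (Icount sigma v u 0 i) - INR (i + 1) * P v u < 0).

Definition is_SRT_router (sigma : V -> nat -> V) : Prop :=
  forall (v : V) (i : nat),
    in_T sigma v i (sigma v i) /\
    forall u, in_T sigma v i u ->
      ((INR (Icount sigma v (sigma v i) 0 i) + 1) / P v (sigma v i)
        <= (INR (Icount sigma v u 0 i) + 1) / P v u).

Definition is_billiard_router (sigma : V -> nat -> V) : Prop :=
  forall (v : V) (i : nat),
    nbr v (sigma v i) /\
    forall u, nbr v u ->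
      ((INR (Icount sigma v (sigma v i) 0 i) + 1) / P v (sigma v i)
        <= (INR (Icount sigma v u 0 i) + 1) / P v u).

End Markov.

Definition Omega (n : nat) (a : 'I_n -> nat) (b : nat) : predArgType :=
  {x : {ffun 'I_n -> bool} | (\sum_(i < n) a i * x i <= b)%N}.
Arguments Omega : clear implicits.


Definition l1dist (n : nat) (x y : {ffun 'I_n -> bool}) : nat :=
  #|[set i : 'I_n | x i != y i]|.

Definition nbr_Kna_card (n : nat) (a : 'I_n -> nat) (b : nat) (x : Omega n a b) : nat :=
  #|[set y : Omega n a b | l1dist (val x) (val y) == 1%N]|.

Definition P_Kna (n : nat) (a : 'I_n -> nat) (b : nat) (x y : Omega n a b) : R :=
  if l1dist (val x) (val y) == 1%N then (/ (2 * INR n))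
  else if x == y then (1 - INR (nbr_Kna_card x) / (2 * INR n))
  else R0.

Definition unif_Kna (n : nat) (a : 'I_n -> nat) (b : nat) (x : Omega n a b) : R :=
  (/ INR #|Omega n a b|).

(* Main.v *)
Require Import Defs.
From Stdlib Require Import Reals.
From mathcomp Require Import all_boot.
Open Scope R_scope.

From HB Require Import structures.
From Stdlib Require Import Lra Lia.
From Stdlib Require ZArith.
From mathcomp Require Import zify.
Open Scope R_scope.
Set Implicit Arguments.
Unset Strict Implicit.

HB.instance Definition _ := Monoid.isComLaw.Build R R0 Rplus (fun x y z => esym (Rplus_assoc x y z)) Rplus_comm Rplus_0_l.

Section RS.
Variable V : finType.
Implicit Types f g : V -> R.

Lemma rsum_add f g : rsum (fun x => f x + g x) = rsum f + rsum g.
Proof. by rewrite /rsum big_split. Qed.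

Lemma rsum_scal c f : rsum (fun x => c * f x) = c * rsum f.
Proof.
rewrite /rsum; elim/big_rec2: _ => [|i y1 y2 _ ->]; first by rewrite Rmult_0_r.
by rewrite Rmult_plus_distr_l.
Qed.

Lemma rsum_le f g : (forall x, f x <= g x) -> rsum f <= rsum g.
Proof.
move=> H; rewrite /rsum; elim/big_rec2: _ => [|i y1 y2 _ Hy]; first lra.
by apply Rplus_le_compat.
Qed.

Lemma rsum_ext f g : (forall x, f x = g x) -> rsum f = rsum g.
Proof. by move=> H; rewrite /rsum; apply: eq_bigr => x _. Qed.

Lemma rsum_abs f : Rabs (rsum f) <= rsum (fun x => Rabs (f x)).
Proof.
rewrite /rsum; elim/big_rec2: _ => [|i y1 y2 _ Hy]; first by rewrite Rabs_R0; lra.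
by apply: Rle_trans (Rabs_triang _ _) _; lra.
Qed.

Lemma rsum_ge0 f : (forall x, 0 <= f x) -> 0 <= rsum f.
Proof.
move=> H; rewrite /rsum; elim/big_rec: _ => [|i y _ Hy]; first lra.
by have := H i; lra.
Qed.

Lemma rsum_exch (f : V -> V -> R) :
  rsum (fun x => rsum (fun y => f x y)) = rsum (fun y => rsum (fun x => f x y)).
Proof. by rewrite /rsum exchange_big. Qed.

Lemma rsum0 : rsum (fun _ : V => 0) = 0.
Proof. by rewrite /rsum big1. Qed.

Lemma rsum_opp f : rsum (fun x => - f x) = - rsum f.
Proof.
rewrite /rsum; elim/big_rec2: _ => [|i y1 y2 _ ->]; first lra. lra.
Qed.

Lemma rsum_sub f g : rsum (fun x => f x - g x) = rsum f - rsum g.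
Proof. by rewrite /Rminus -rsum_opp -rsum_add. Qed.

Lemma rsum_delta (a : V) (c : V -> R) : rsum (fun x => if x == a then c x else 0) = c a.
Proof.
rewrite /rsum (bigD1 a) //= eqxx big1 ?Rplus_0_r // => i /negbTE ->. by [].
Qed.

Lemma rsum_delta' (a : V) (c : V -> R) : rsum (fun x => if a == x then c x else 0) = c a.
Proof. rewrite -(rsum_delta a c); apply rsum_ext => x; by rewrite eq_sym. Qed.

Lemma rsum_nat (F : V -> nat) : INR (\sum_(x : V) F x)%N = rsum (fun x => INR (F x)).
Proof.
rewrite /rsum; elim/big_rec2: _ => [//|i y1 y2 _ <-]; by rewrite plus_INR.
Qed.

Lemma rsum_ind (p : pred V) (c : R) :
  rsum (fun x => if p x then c else 0) = INR #|p| * c.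
Proof.
rewrite /rsum -big_mkcond big_const /=.
elim: #|p| => [|k IH] /=; first lra.
rewrite IH; destruct k; simpl; lra.
Qed.

End RS.

Section Pw.
Variable V : finType.
Variable P : V -> V -> R.
Hypothesis P_ge0 : forall v u, 0 <= P v u.
Hypothesis P_row : forall v, rsum (P v) = 1.
Hypothesis P_sym : forall v u, P v u = P u v.

Lemma Ppow_CK a b x u :
  Ppow P (a + b) x u = rsum (fun y => Ppow P a x y * Ppow P b y u).
Proof.
elim: b u => [|b IH] u.
  rewrite addn0 /= -(rsum_delta u (Ppow P a x)); apply rsum_ext => y.
  by case: (y == u); ring.
rewrite addnS /=.
transitivity (rsum (fun w => rsum (fun y => Ppow P a x y * Ppow P b y w * P w u))).
  apply rsum_ext => w; rewrite IH Rmult_comm -rsum_scal; apply rsum_ext => y; ring.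
rewrite rsum_exch; apply rsum_ext => y.
rewrite -rsum_scal; apply rsum_ext => w; ring.
Qed.

Lemma Ppow_ge0 t x u : 0 <= Ppow P t x u.
Proof.
elim: t x u => [|t IH] x u /=; first by case: (x == u); lra.
apply rsum_ge0 => w; apply Rmult_le_pos; auto.
Qed.

Lemma Ppow_row t x : rsum (Ppow P t x) = 1.
Proof.
elim: t x => [|t IH] x /=.
  rewrite -(rsum_delta' x (fun _ => 1)); apply rsum_ext => w; by case: (x == w).
rewrite rsum_exch -(IH x); apply rsum_ext => w.
by rewrite rsum_scal P_row Rmult_1_r.
Qed.

Lemma Ppow1 x u : Ppow P 1 x u = P x u.
Proof. rewrite /= -(rsum_delta' x (fun w => P w u)); apply rsum_ext => w; case: (x == w); ring. Qed.

Lemma Ppow_sym t x u : Ppow P t x u = Ppow P t u x.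
Proof.
elim: t x u => [|t IH] x u; first by rewrite /= eq_sym.
have -> : Ppow P t.+1 u x = Ppow P (1 + t) u x by [].
rewrite Ppow_CK [LHS]/=; apply rsum_ext => y; rewrite Ppow1 IH P_sym; ring.
Qed.

Lemma Ppow_col t u : rsum (fun x => Ppow P t x u) = 1.
Proof. rewrite -(Ppow_row t u); apply rsum_ext => x; exact: Ppow_sym. Qed.

Lemma contract (f : V -> R) (t : nat) :
  rsum (fun u => Rabs (rsum (fun x => f x * Ppow P t x u))) <= rsum (fun x => Rabs (f x)).
Proof.
apply: Rle_trans (_ : rsum (fun u => rsum (fun x => Rabs (f x) * Ppow P t x u)) <= _).
  apply rsum_le => u; apply: Rle_trans (rsum_abs _) _; apply rsum_le => x.
  rewrite Rabs_mult (Rabs_right (Ppow P t x u)); first lra.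
  by apply Rle_ge, Ppow_ge0.
rewrite rsum_exch; apply Req_le, rsum_ext => x.
by rewrite rsum_scal Ppow_row Rmult_1_r.
Qed.

Lemma contract_half (f : V -> R) (N : nat) (c : R) :
  rsum f = 0 ->
  (forall x, rsum (fun u => Rabs (Ppow P N x u - c)) <= /2) ->
  rsum (fun u => Rabs (rsum (fun x => f x * Ppow P N x u))) <= / 2 * rsum (fun x => Rabs (f x)).
Proof.
move=> Hf Hx.
have E : forall u, rsum (fun x => f x * Ppow P N x u) = rsum (fun x => f x * (Ppow P N x u - c)).
  move=> u; have := rsum_sub (fun x => f x * Ppow P N x u) (fun x => c * f x).
  rewrite rsum_scal Hf Rmult_0_r Rminus_0_r => <-; apply rsum_ext => x; ring.
apply: Rle_trans (_ : rsum (fun u => rsum (fun x => Rabs (f x) * Rabs (Ppow P N x u - c))) <= _).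
  apply rsum_le => u; rewrite E; apply: Rle_trans (rsum_abs _) _; apply rsum_le => x.
  by rewrite Rabs_mult; lra.
rewrite rsum_exch -rsum_scal; apply rsum_le => x.
rewrite rsum_scal; have := Hx x; have := Rabs_pos (f x); nra.
Qed.

End Pw.

Fixpoint sumR (f : nat -> R) (T : nat) : R :=
  match T with O => 0 | S T => sumR f T + f T end.

Lemma sumR_ext f g T : (forall s, (s < T)%N -> f s = g s) -> sumR f T = sumR g T.
Proof.
elim: T => [//|T IH] H /=; rewrite IH ?H // => s Hs; apply H; exact: ltnW.
Qed.

Lemma sumR_le f g T : (forall s, (s < T)%N -> f s <= g s) -> sumR f T <= sumR g T.
Proof.
elim: T => [|T IH] H /=; first lra.
apply Rplus_le_compat; [apply IH => s Hs; apply H; exact: ltnW | exact: H].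
Qed.

Lemma sumR_shift f T : sumR f T.+1 = f 0%N + sumR (fun s => f s.+1) T.
Proof. elim: T => [|T IH] /=; first lra. rewrite /= in IH; rewrite IH; lra. Qed.

Lemma sumR_add f a b : sumR f (a + b) = sumR f a + sumR (fun s => f (a + s)%N) b.
Proof. elim: b => [|b IH]; first by rewrite addn0 /=; lra. rewrite addnS /= IH; lra. Qed.

Lemma sumR_const_le f T c : (forall s, (s < T)%N -> f s <= c) -> sumR f T <= INR T * c.
Proof.
elim: T => [|T IH] H; first (simpl; lra).
have := IH (fun s Hs => H s (ltnW Hs)); have := H T (ltnSn T).
rewrite S_INR /=; lra.
Qed.

Lemma sumR_abs f T : Rabs (sumR f T) <= sumR (fun s => Rabs (f s)) T.
Proof.
elim: T => [|T IH] /=; first by rewrite Rabs_R0; lra.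
apply: Rle_trans (Rabs_triang _ _) _; lra.
Qed.

Section Mix.
Variable V : finType.
Variable P : V -> V -> R.
Hypothesis P_ge0 : forall v u, 0 <= P v u.
Hypothesis P_row : forall v, rsum (P v) = 1.
Hypothesis P_sym : forall v u, P v u = P u v.
Variable N : nat.
Variable c : R.
Hypothesis N_mix : forall x, rsum (fun u => Rabs (Ppow P N x u - c)) <= /2.
Variable w : V.

Definition ee (s : nat) := rsum (fun u => Rabs (Ppow P s.+1 w u - Ppow P s w u)).

Lemma ee_ge0 s : 0 <= ee s.
Proof. apply rsum_ge0 => u; exact: Rabs_pos. Qed.

Lemma delta_shift s j u :
  Ppow P (s.+1 + j) w u - Ppow P (s + j) w u =
  rsum (fun x => (Ppow P s.+1 w x - Ppow P s w x) * Ppow P j x u).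
Proof.
rewrite !Ppow_CK -rsum_sub; apply rsum_ext => x; ring.
Qed.

Lemma ee_shift s j :
  ee (s + j) = rsum (fun u => Rabs (rsum (fun x => (Ppow P s.+1 w x - Ppow P s w x) * Ppow P j x u))).
Proof. rewrite /ee; apply rsum_ext => u; by rewrite -delta_shift addSn. Qed.

Lemma ee_mono s j : ee (s + j) <= ee s.
Proof. rewrite ee_shift; exact: contract. Qed.

Lemma ee_half s : ee (s + N) <= / 2 * ee s.
Proof.
rewrite ee_shift; apply: contract_half => //.
by rewrite rsum_sub !Ppow_row //; lra.
Qed.

Lemma ee0 : ee 0 <= 2.
Proof.
rewrite /ee; apply: Rle_trans (_ : rsum (fun u => Ppow P 1 w u + Ppow P 0 w u) <= _).
  apply rsum_le => u; have := Ppow_ge0 P_ge0 1 w u; have := Ppow_ge0 P_ge0 0 w u.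
  move=> h1 h2; apply Rabs_le; split; lra.
rewrite rsum_add !Ppow_row //; lra.
Qed.

Hypothesis N_pos : (0 < N)%N.

Lemma chunk T j : sumR (fun s => ee (j + s)) T <= 2 * INR N * ee j.
Proof.
elim: T {-2}T (leqnn T) j => [|T IH] T' HT j.
  rewrite leqn0 in HT; move/eqP: HT => ->; simpl.
  have := ee_ge0 j; have := pos_INR N; nra.
case: (leqP T' N) => HN.
  apply: Rle_trans (sumR_const_le (c := ee j) _) _.
    move=> s _; exact: ee_mono.
  have := ee_ge0 j; have := le_INR _ _ (ssrnat.leP HN); have := pos_INR N; nra.
have -> : T' = (N + (T' - N))%N by rewrite subnKC // ltnW.
rewrite sumR_add.
have H1 : sumR (fun s => ee (j + s)) N <= INR N * ee j.
  apply sumR_const_le => s _; exact: ee_mono.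
have H2 : sumR (fun s => ee (j + (N + s))) (T' - N) <= 2 * INR N * ee (j + N).
  rewrite (sumR_ext (g := fun s => ee ((j + N) + s))); last by move=> s _; rewrite addnA.
  apply IH; lia.
have H3 := ee_half j; have := ee_ge0 j; have := pos_INR N; nra.
Qed.

Definition Dl (s : nat) (x y : V) : R :=
  match s with O => Ppow P 0 x y | S s' => Ppow P s x y - Ppow P s' x y end.

Lemma Dl_sum T : sumR (fun s => rsum (fun x => Rabs (Dl s x w))) T <= 1 + 4 * INR N.
Proof.
case: T => [|T]; first by simpl; have := pos_INR N; lra.
rewrite sumR_shift.
have -> : rsum (fun x => Rabs (Dl 0 x w)) = 1.
  rewrite /= -(rsum_delta w (fun _ => 1)); apply rsum_ext => x; case: (x == w); rewrite ?Rabs_R1 ?Rabs_R0 //.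
rewrite (sumR_ext (g := fun s => ee (0 + s))); last first.
  move=> s _; rewrite add0n /ee; apply rsum_ext => x.
  change (Dl s.+1 x w) with (Ppow P s.+1 x w - Ppow P s x w).
  rewrite (Ppow_sym P_sym s.+1 x w) (Ppow_sym P_sym s x w) //.
have := chunk T 0; have := ee0; have := pos_INR N; nra.
Qed.

End Mix.

Lemma rsum_sumR (V : finType) (f : V -> nat -> R) T :
  rsum (fun u => sumR (f u) T) = sumR (fun s => rsum (fun u => f u s)) T.
Proof.
elim: T => [|T IH] /=; first exact: rsum0.
by rewrite rsum_add IH.
Qed.

Lemma sumR_first (a : R) T :
  sumR (fun s => match s with O => a | _ => 0 end) T = match T with O => 0 | _ => a end.
Proof.
case: T => [//|T]; rewrite sumR_shift.
have -> : sumR (fun s => match s.+1 with O => a | _ => 0 end) T = 0.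
  by elim: T => [//|T IH] /=; rewrite IH; lra.
lra.
Qed.

Lemma sumR_mulr f T c : sumR f T * c = sumR (fun s => f s * c) T.
Proof. elim: T => [|T IH] /=; first ring. rewrite -IH; ring. Qed.

Lemma sumR_plus f g T : sumR f T + sumR g T = sumR (fun s => f s + g s) T.
Proof. elim: T => [|T IH] /=; first ring. rewrite -IH; ring. Qed.

Section Dyn.
Variable V : finType.
Variable P : V -> V -> R.
Hypothesis P_ge0 : forall v u, 0 <= P v u.
Hypothesis P_row : forall v, rsum (P v) = 1.
Variable sigma : V -> nat -> V.
Hypothesis sigma_nbr : forall v j, 0 < P v (sigma v j).
Variable chi0 : V -> nat.

Definition st t := iter t (router_step sigma) (fun _ => 0%N, chi0).
Definition cum t v := (st t).1 v.

Lemma router_stepE p : router_step sigma p =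
  (fun v => p.1 v + p.2 v, fun u => \sum_(v : V) Icount sigma v u (p.1 v) (p.1 v + p.2 v))%N.
Proof. by case: p. Qed.

Lemma cum0 v : cum 0 v = 0%N.
Proof. by []. Qed.

Lemma cumS t v : cum t.+1 v = (cum t v + chi sigma chi0 t v)%N.
Proof. by rewrite /cum /st iterS router_stepE. Qed.

Lemma chiS t u : chi sigma chi0 t.+1 u =
  (\sum_(v : V) Icount sigma v u (cum t v) (cum t v + chi sigma chi0 t v))%N.
Proof. by rewrite /chi iterS router_stepE. Qed.

Lemma Icount_split v u z z' : (z <= z')%N ->
  Icount sigma v u 0 z' = (Icount sigma v u 0 z + Icount sigma v u z z')%N.
Proof.
move=> H; rewrite /Icount !subn0 -count_cat -iotaD.
by rewrite subnKC.
Qed.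

Lemma Icount_S v u z :
  Icount sigma v u 0 z.+1 = (Icount sigma v u 0 z + (sigma v z == u))%N.
Proof.
rewrite (Icount_split v u (leqnSn z)) /Icount subSnn /=; lia.
Qed.

Lemma Icount_sum v z z' : rsum (fun u => INR (Icount sigma v u z z')) = INR (z' - z).
Proof.
rewrite /Icount -{2}(size_iota z (z' - z)); elim: (iota z (z' - z)) => [|j l IH].
  simpl; exact: rsum0.
change (size (j :: l)) with (size l).+1.
rewrite (rsum_ext (g := fun u => (if sigma v j == u then 1 else 0) + INR (count (fun j0 => sigma v j0 == u) l))); last first.
  move=> u; rewrite [count _ _]/= plus_INR; case: (sigma v j == u) => /=; lra.
rewrite rsum_add IH (rsum_delta' (sigma v j) (fun _ => 1)).
by rewrite S_INR; lra.
Qed.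

Lemma Icount_nbr v u z z' : P v u = 0 -> Icount sigma v u z z' = 0%N.
Proof.
move=> H; rewrite /Icount; elim: (iota z (z' - z)) => [//|j l IH] /=.
rewrite IH addn0; case: eqP => // E.
by have := sigma_nbr v j; rewrite E H; lra.
Qed.

Definition X v u z := INR (Icount sigma v u 0 z) - INR z * P v u.
Definition A t v u := X v u (cum t v).
Definition H t u := rsum (fun v => A t v u).

Lemma X_sum v z : rsum (fun u => X v u z) = 0.
Proof.
rewrite /X rsum_sub Icount_sum rsum_scal P_row subn0; lra.
Qed.

Lemma H0 u : H 0 u = 0.
Proof.
rewrite /H /A -(rsum0 V); apply rsum_ext => v; rewrite cum0 /X /Icount /=; lra.
Qed.

Lemma mu_S T w : mu P chi0 T.+1 w = rsum (fun u => mu P chi0 T u * P u w).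
Proof.
rewrite /mu /=.
transitivity (rsum (fun v => rsum (fun u => INR (chi0 v) * Ppow P T v u * P u w))).
  apply rsum_ext => v; rewrite -rsum_scal; apply rsum_ext => u; ring.
rewrite rsum_exch; apply rsum_ext => u.
rewrite Rmult_comm -rsum_scal; apply rsum_ext => v; ring.
Qed.

Definition Ext (s : nat) (x y : V) : R := match s with O => Ppow P 0 x y | _ => 0 end.

Lemma Dl_step s x w :
  rsum (fun u => Dl P s x u * P u w) = Dl P s.+1 x w + Ext s x w.
Proof.
case: s => [|s].
  rewrite /Dl /Ext; change (Ppow P 1 x w) with (rsum (fun u => Ppow P 0 x u * P u w)); lra.
rewrite /Ext Rplus_0_r.
change (Dl P s.+2 x w) with (Ppow P s.+2 x w - Ppow P s.+1 x w).
change (Ppow P s.+2 x w) with (rsum (fun u => Ppow P s.+1 x u * P u w)).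
change (Ppow P s.+1 x w) with (rsum (fun u => Ppow P s x u * P u w)).
rewrite -rsum_sub; apply rsum_ext => u; rewrite /Dl; ring.
Qed.

Lemma chi_step T w :
  INR (chi sigma chi0 T.+1 w) = H T.+1 w - H T w + rsum (fun v => INR (chi sigma chi0 T v) * P v w).
Proof.
rewrite chiS rsum_nat /H -rsum_sub -rsum_add; apply rsum_ext => v.
rewrite /A /X cumS (Icount_split v w (leq_addr (chi sigma chi0 T v) (cum T v))).
rewrite !plus_INR; ring.
Qed.

Theorem D_formula T w :
  INR (chi sigma chi0 T w) - mu P chi0 T w =
  sumR (fun s => rsum (fun x => H (T - s) x * Dl P s x w)) T.
Proof.
elim: T w => [|T IH] w.
  rewrite /= /mu /=.
  rewrite (rsum_ext (g := fun v => if v == w then INR (chi0 v) else 0)); last by move=> v; case: (v == w); ring.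
  rewrite rsum_delta /chi /=; ring.
rewrite chi_step mu_S.
have E1 : rsum (fun v => INR (chi sigma chi0 T v) * P v w) - rsum (fun u => mu P chi0 T u * P u w)
   = rsum (fun u => (INR (chi sigma chi0 T u) - mu P chi0 T u) * P u w).
  by rewrite -rsum_sub; apply rsum_ext => u; ring.
have E2 : rsum (fun u => (INR (chi sigma chi0 T u) - mu P chi0 T u) * P u w)
  = sumR (fun s => rsum (fun x => H (T - s) x * Dl P s.+1 x w)) T
    + sumR (fun s => rsum (fun x => H (T - s) x * Ext s x w)) T.
  rewrite (rsum_ext (g := fun u => sumR (fun s => rsum (fun x => H (T - s) x * Dl P s x u) * P u w) T)); last first.
    by move=> u; rewrite IH sumR_mulr.
  rewrite rsum_sumR.
  rewrite sumR_plus.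
  apply sumR_ext => s _.
  transitivity (rsum (fun x => H (T - s) x * rsum (fun u => Dl P s x u * P u w))).
    rewrite (rsum_ext (g := fun u => rsum (fun x => H (T - s) x * Dl P s x u * P u w))); last first.
      by move=> u; rewrite Rmult_comm -rsum_scal; apply rsum_ext => x; ring.
    rewrite rsum_exch; apply rsum_ext => x.
    rewrite -rsum_scal; apply rsum_ext => u; ring.
  rewrite -rsum_add; apply rsum_ext => x; rewrite Dl_step; ring.
have -> : forall a b c d : R, a - b + c - d = a - b + (c - d) by move=> *; ring.
rewrite E1 E2.
have E3 : sumR (fun s => rsum (fun x => H (T - s) x * Ext s x w)) T
    = match T with O => 0 | _ => H T w end.
  rewrite (sumR_ext (g := fun s => match s with O => H T w | _ => 0 end)); last first.
    move=> [|s] _ /=; last by rewrite (rsum_ext (g := fun _ : V => 0)); [exact: rsum0 | move=> x; rewrite /Ext; ring].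
    rewrite subn0 /Ext (rsum_ext (g := fun x => if x == w then H T x else 0)).
      by rewrite rsum_delta.
    by move=> x /=; case: (x == w); ring.
  exact: sumR_first.
rewrite E3 sumR_shift subn0.
have -> : rsum (fun x => H T.+1 x * Dl P 0 x w) = H T.+1 w.
  rewrite /Dl (rsum_ext (g := fun x => if x == w then H T.+1 x else 0)).
    by rewrite rsum_delta.
  by move=> x /=; case: (x == w); ring.
rewrite (sumR_ext (f := fun s => rsum (fun x => H (T.+1 - s.+1) x * Dl P s.+1 x w))
   (g := fun s => rsum (fun x => H (T - s) x * Dl P s.+1 x w))); last by move=> s _; rewrite subSS.
case: (T) => [|T']; first by rewrite H0 /=; ring.
ring.
Qed.

End Dyn.

Section Bound.
Variable V : finType.
Variable P : V -> V -> R.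
Hypothesis P_ge0 : forall v u, 0 <= P v u.
Hypothesis P_row : forall v, rsum (P v) = 1.
Hypothesis P_sym : forall v u, P v u = P u v.
Variable sigma : V -> nat -> V.
Hypothesis sigma_nbr : forall v j, 0 < P v (sigma v j).
Variable chi0 : V -> nat.
Variable E : V -> V -> bool.
Hypothesis E_sym : forall v u, E v u = E u v.
Variable deg : R.
Hypothesis E_deg : forall v, rsum (fun u => if E v u then 1 else 0) <= deg.
Hypothesis nonE : forall v u, u != v -> ~~ E v u -> P v u = 0.
Hypothesis Xb : forall v u z, E v u -> Rabs (X P sigma v u z) <= 1.

Lemma key t (c : V -> R) :
  Rabs (rsum (fun x => H P sigma chi0 t x * c x)) <= 2 * deg * rsum (fun x => Rabs (c x)).
Proof.
have E1 : rsum (fun x => H P sigma chi0 t x * c x)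
   = rsum (fun v => rsum (fun x => A P sigma chi0 t v x * (c x - c v))).
  rewrite /H (rsum_ext (g := fun x => rsum (fun v => A P sigma chi0 t v x * c x))); last first.
    by move=> x; rewrite Rmult_comm -rsum_scal; apply rsum_ext => v; ring.
  rewrite rsum_exch; apply rsum_ext => v.
  rewrite (rsum_ext (f := fun x => A P sigma chi0 t v x * (c x - c v))
     (g := fun x => A P sigma chi0 t v x * c x - c v * A P sigma chi0 t v x)); last by move=> x; ring.
  rewrite rsum_sub rsum_scal /A X_sum //; ring.
rewrite E1; apply: Rle_trans (rsum_abs _) _.
apply: Rle_trans (_ : rsum (fun v => rsum (fun x => (if E v x then 1 else 0) * (Rabs (c x) + Rabs (c v)))) <= _).
  apply rsum_le => v; apply: Rle_trans (rsum_abs _) _; apply rsum_le => x.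
  rewrite Rabs_mult.
  case: (eqVneq x v) => [->|Hxv].
    rewrite Rminus_diag_eq // Rabs_R0 Rmult_0_r.
    case: (E v v); have := Rabs_pos (c v); lra.
  have Hc : Rabs (c x - c v) <= Rabs (c x) + Rabs (c v).
    by apply: Rle_trans (Rabs_triang _ _) _; rewrite Rabs_Ropp; lra.
  case HE: (E v x).
    have := Xb (cum sigma chi0 t v) HE; rewrite /A.
    have := Rabs_pos (X P sigma v x (cum sigma chi0 t v)); have := Rabs_pos (c x - c v); nra.
  have HP := nonE Hxv (negbT HE).
  rewrite /A /X (Icount_nbr sigma_nbr) // HP Rmult_0_r Rminus_0_r /= Rabs_R0; lra.
rewrite (rsum_ext (g := fun v => rsum (fun x => (if E v x then 1 else 0) * Rabs (c x)) + Rabs (c v) * rsum (fun x => if E v x then 1 else 0))); last first.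
  move=> v; rewrite -rsum_scal -rsum_add; apply rsum_ext => x; ring.
rewrite rsum_add rsum_exch.
have H1 : rsum (fun x => rsum (fun v => (if E v x then 1 else 0) * Rabs (c x))) <= deg * rsum (fun x => Rabs (c x)).
  rewrite -rsum_scal; apply rsum_le => x.
  rewrite (rsum_ext (g := fun v => Rabs (c x) * (if E x v then 1 else 0))); last by move=> v; rewrite E_sym; ring.
  rewrite rsum_scal; have := E_deg x; have := Rabs_pos (c x); nra.
have H2 : rsum (fun v => Rabs (c v) * rsum (fun x => if E v x then 1 else 0)) <= deg * rsum (fun x => Rabs (c x)).
  rewrite -rsum_scal; apply rsum_le => v.
  have := E_deg v; have := Rabs_pos (c v); nra.
lra.
Qed.

Variable N : nat.
Variable cc : R.
Hypothesis N_pos : (0 < N)%N.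
Hypothesis N_mix : forall x, rsum (fun u => Rabs (Ppow P N x u - cc)) <= /2.

Theorem main_bound T w : 0 <= deg ->
  Rabs (INR (chi sigma chi0 T w) - mu P chi0 T w) <= 2 * deg * (1 + 4 * INR N).
Proof.
move=> Hd.
rewrite D_formula.
apply: Rle_trans (sumR_abs _ _) _.
apply: Rle_trans (_ : sumR (fun s => 2 * deg * rsum (fun x => Rabs (Dl P s x w))) T <= _).
  apply sumR_le => s _; exact: key.
rewrite -(sumR_ext (f := fun s => rsum (fun x => Rabs (Dl P s x w)) * (2 * deg))); last by move=> s _; ring.
rewrite -sumR_mulr.
have := Dl_sum P_ge0 P_row P_sym N_mix w N_pos T.
have := sumR_le (f := fun _ => 0) (g := fun s => rsum (fun x => Rabs (Dl P s x w))) (T := T).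
move=> h; nra.
Qed.

End Bound.

Lemma rsum_ge_term (V : finType) (f : V -> R) a : (forall x, 0 <= f x) -> f a <= rsum f.
Proof.
move=> H; rewrite /rsum (bigD1 a) //=.
have : 0 <= \big[Rplus/R0]_(i | i != a) f i.
  by elim/big_rec: _ => [|i y _ Hy]; [lra | have := H i; lra].
lra.
Qed.

Section Router.
Variable V : finType.
Variable P : V -> V -> R.
Hypothesis P_ge0 : forall v u, 0 <= P v u.
Hypothesis P_row : forall v, rsum (P v) = 1.
Variable sigma : V -> nat -> V.
Hypothesis sigma_nbr : forall v j, 0 < P v (sigma v j).
Variable v : V.

Notation I u z := (Icount sigma v u 0 z).

Hypothesis HC : forall z m u, (z < m)%N ->
  INR (I u z) + 1 <= INR m * P v u ->
  INR m * P v (sigma v z) < INR (I (sigma v z) z) + 1 ->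
  INR (z + 1) * P v u <= INR (I u z).

Lemma I0 u : I u 0 = 0%N.
Proof. by []. Qed.

Lemma inv z : forall m (k : V -> nat), (z <= m)%N ->
  (forall u, INR (k u) <= INR m * P v u) ->
  ((\sum_(u : V) (k u - I u z)) <= m - z)%N.
Proof.
elim: z => [|z IH] m k Hm Hk.
  rewrite subn0; apply/leP; apply INR_le.
  rewrite (eq_bigr (fun u => k u)); last by move=> u _; rewrite I0 subn0.
  rewrite rsum_nat.
  apply: Rle_trans (rsum_le Hk) _.
  by rewrite rsum_scal P_row; lra.
set w := sigma v z.
have caseA : forall k, (forall u, INR (k u) <= INR m * P v u) -> (I w z < k w)%N ->
    ((\sum_(u : V) (k u - I u z.+1)) <= m - z.+1)%N.
  move=> k' Hk' Hlt.
  have := IH m k' (ltnW Hm) Hk'.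
  rewrite (bigD1 w (P := predT) (F := fun u => k' u - I u z)%N isT).
  rewrite (bigD1 w (P := predT) (F := fun u => k' u - I u z.+1)%N isT) /= Icount_S eqxx.
  rewrite [\sum_(i | i != w) (k' i - I i z.+1)%N](eq_bigr (fun u => k' u - I u z)%N); last first.
    by move=> u Hu /=; rewrite Icount_S eq_sym (negbTE Hu) addn0.
  lia.
case: (ltnP (I w z) (k w)) => Hkw; first exact: caseA.
case: (Rle_lt_dec (INR (I w z) + 1) (INR m * P v w)) => Hw.
  set k' := fun u => if u == w then (I w z).+1 else k u.
  have Hk'b : forall u, INR (k' u) <= INR m * P v u.
    by move=> u; rewrite /k'; case: eqP => [->|_]; [rewrite S_INR | apply Hk].
  have := caseA k' Hk'b; rewrite /k' eqxx ltnSn => /(_ isT).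
  suff -> : (\sum_(u : V) (k u - I u z.+1))%N = (\sum_(u : V) (k' u - I u z.+1))%N by [].
  apply eq_bigr => u _; rewrite /k'; case: eqP => [->|//].
  rewrite Icount_S eqxx; lia.
apply/leP; apply INR_le.
rewrite rsum_nat minus_INR; last by apply/leP.
apply: Rle_trans (_ : rsum (fun u => (INR m - INR z.+1) * P v u) <= _); last first.
  by rewrite rsum_scal P_row; lra.
apply rsum_le => u.
have Hmz : INR z.+1 <= INR m by apply le_INR; apply/leP.
case: (leqP (k u) (I u z.+1)) => Hku.
  have -> : (k u - I u z.+1)%N = 0%N by apply/eqP; rewrite subn_eq0.
  have := P_ge0 v u; change (INR 0) with 0; nra.
rewrite minus_INR; last by apply/leP; exact: ltnW.
have HI : (I u z <= I u z.+1)%N by rewrite Icount_S leq_addr.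
have HI2 : INR (I u z) + 1 <= INR (k u).
  rewrite -S_INR; apply le_INR; apply/leP; exact: leq_ltn_trans HI Hku.
have := HC Hm (Rle_trans _ _ _ HI2 (Hk u)) Hw.
have := le_INR _ _ (elimT leP HI).
rewrite -addn1 plus_INR /= in Hmz *.
have := Hk u; simpl INR in *; lra.
Qed.

Lemma lower z u : -1 < INR (I u z) - INR z * P v u.
Proof.
case: (Rlt_le_dec (-1) (INR (I u z) - INR z * P v u)) => // H; exfalso.
set k := fun x => if x == u then (I u z).+1 else 0%N.
have Hk : forall x, INR (k x) <= INR z * P v x.
  move=> x; rewrite /k; case: eqP => [->|_]; first by rewrite S_INR; lra.
  have := P_ge0 v x; have := pos_INR z; simpl INR; nra.
have := inv (leqnn z) Hk; rewrite subnn leqn0 => /eqP.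
rewrite (bigD1 u) //= /k eqxx; lia.
Qed.

End Router.

Lemma div_le_mul (a p b : R) : 0 < p -> a / p <= b -> a <= b * p.
Proof.
move=> Hp H; have E : a = (a / p) * p by field; lra.
rewrite E; apply Rmult_le_compat_r; lra.
Qed.

Lemma mul_le_div (a p b : R) : 0 < p -> a <= b * p -> a / p <= b.
Proof.
move=> Hp H; have E : b = (b * p) / p by field; lra.
rewrite E; apply Rmult_le_compat_r; [apply Rlt_le, Rinv_0_lt_compat; lra | lra].
Qed.

Lemma le_div_mul (r a p : R) : 0 < p -> r <= a / p -> r * p <= a.
Proof.
move=> Hp H; have E : a = (a / p) * p by field; lra.
rewrite E; apply Rmult_le_compat_r; lra.
Qed.

Section RT.
Variable V : finType.
Variable P : V -> V -> R.
Hypothesis P_ge0 : forall v u, 0 <= P v u.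
Hypothesis P_row : forall v, rsum (P v) = 1.
Variable sigma : V -> nat -> V.

Lemma pos_of (m : nat) (a p : R) : 0 <= a -> a + 1 <= INR m * p -> 0 <= p -> 0 < p.
Proof.
move=> Ha H Hp; case: (Rle_lt_or_eq_dec 0 p Hp) => // E; rewrite -E in H; lra.
Qed.

Section SRT.
Hypothesis Hs : is_SRT_router P sigma.

Lemma srt_nbr v j : 0 < P v (sigma v j).
Proof. by case: (Hs v j) => [[]]. Qed.

Lemma srt_HC v z m u : (z < m)%N ->
  INR (Icount sigma v u 0 z) + 1 <= INR m * P v u ->
  INR m * P v (sigma v z) < INR (Icount sigma v (sigma v z) 0 z) + 1 ->
  INR (z + 1) * P v u <= INR (Icount sigma v u 0 z).
Proof.
move=> Hzm H1 H2.
case: (Rle_lt_dec (INR (z + 1) * P v u) (INR (Icount sigma v u 0 z))) => // H3; exfalso.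
have Hpu : 0 < P v u by apply: (pos_of (pos_INR _) H1 (P_ge0 v u)).
have HT : in_T P sigma v z u by split => //; lra.
case: (Hs v z) => [[Hw _] Hmin].
have := Hmin u HT.
have Hd : (INR (Icount sigma v u 0 z) + 1) / P v u <= INR m by apply mul_le_div.
move=> Hm; have := div_le_mul Hw (Rle_trans _ _ _ Hm Hd); lra.
Qed.

Lemma srt_upper v u z : INR (Icount sigma v u 0 z) - INR z * P v u < 1.
Proof.
elim: z => [|z IH]; first by rewrite /Icount /=; lra.
rewrite Icount_S plus_INR S_INR.
case: eqP => [<-|_] /=.
  case: (Hs v z) => [[_ HT] _]; rewrite addn1 S_INR in HT; lra.
have := P_ge0 v u; lra.
Qed.

End SRT.

Section Bill.
Hypothesis Hb : is_billiard_router P sigma.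

Lemma bill_nbr v j : 0 < P v (sigma v j).
Proof. by case: (Hb v j). Qed.

Lemma bill_HC v z m u : (z < m)%N ->
  INR (Icount sigma v u 0 z) + 1 <= INR m * P v u ->
  INR m * P v (sigma v z) < INR (Icount sigma v (sigma v z) 0 z) + 1 ->
  INR (z + 1) * P v u <= INR (Icount sigma v u 0 z).
Proof.
move=> Hzm H1 H2; exfalso.
have Hpu : 0 < P v u by apply: (pos_of (pos_INR _) H1 (P_ge0 v u)).
case: (Hb v z) => [Hw Hmin].
have := Hmin u Hpu.
have Hd : (INR (Icount sigma v u 0 z) + 1) / P v u <= INR m by apply mul_le_div.
move=> Hm; have := div_le_mul Hw (Rle_trans _ _ _ Hm Hd); lra.
Qed.

Definition Kdeg v := rsum (fun x => if Rlt_dec 0 (P v x) then 1 else 0).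

Lemma bill_upper v u z : INR (Icount sigma v u 0 z) - INR z * P v u <= (Kdeg v - 1) * P v u.
Proof.
elim: z => [|z IH].
  rewrite /Icount /=.
  case: (Rle_lt_or_eq_dec 0 _ (P_ge0 v u)) => Hp; last by rewrite -Hp; lra.
  have H0 : forall x, 0 <= (if Rlt_dec 0 (P v x) then 1 else 0) by move=> x; destruct (Rlt_dec 0 (P v x)); simpl; lra.
  have Hk := rsum_ge_term u H0; rewrite -/(Kdeg v) in Hk.
  destruct (Rlt_dec 0 (P v u)); simpl in Hk; [nra | lra].
rewrite Icount_S plus_INR S_INR.
case: eqP => [Hwu|_] /=; last by have := P_ge0 v u; lra.
case: (Hb v z) => [Hw Hmin]; rewrite Hwu in Hw Hmin.
set r := (INR (Icount sigma v u 0 z) + 1) / P v u.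
have Hx : forall x, P v x * r <= INR (Icount sigma v x 0 z) + (if Rlt_dec 0 (P v x) then 1 else 0).
  move=> x; destruct (Rlt_dec 0 (P v x)) as [Hpx|Hpx].
    have := Hmin x Hpx; rewrite -/r => Hr.
    have := le_div_mul Hpx Hr; cbn [is_left]; lra.
  cbn [is_left]; have -> : P v x = 0 by have := P_ge0 v x; lra.
  have := pos_INR (Icount sigma v x 0 z); lra.
have Hs : r <= INR z + Kdeg v.
  have := rsum_le Hx; rewrite rsum_add Icount_sum subn0 (rsum_ext (g := fun x => r * P v x)); last by move=> x; ring.
  rewrite rsum_scal P_row /Kdeg; lra.
have : INR (Icount sigma v u 0 z) + 1 = r * P v u by rewrite /r; field; rewrite /nbr in Hw; lra.
rewrite /nbr in Hw; nra.
Qed.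

End Bill.
End RT.

Lemma l1dist_sym n (x y : {ffun 'I_n -> bool}) : l1dist x y = l1dist y x.
Proof. rewrite /l1dist; apply: eq_card => i; rewrite !inE eq_sym. by []. Qed.

Lemma l1dist_self n (x : {ffun 'I_n -> bool}) : l1dist x x = 0%N.
Proof. rewrite /l1dist; apply: eq_card0 => i; rewrite !inE eqxx. by []. Qed.

Lemma l1dist1 n (x y : {ffun 'I_n -> bool}) : l1dist x y = 1%N ->
  exists i, forall j, (x j != y j) = (j == i).
Proof.
move=> /eqP /cards1P [i Hi]; exists i => j.
by have := congr1 (fun A : {set 'I_n} => j \in A) Hi; rewrite !inE.
Qed.

Lemma card_nbr n a b (x : Omega n a b) : (nbr_Kna_card x <= n)%N.
Proof.
rewrite /nbr_Kna_card.
case: n a b x => [|n] a b x.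
  rewrite leqn0 cards_eq0; apply/eqP/setP => y; rewrite !inE.
  by rewrite /l1dist (eq_card0 (A := [set i : 'I_0 | _])) // => -[].
set S := [set y : Omega n.+1 a b | _].
pose f (y : Omega n.+1 a b) := odflt ord0 [pick i | val x i != val y i].
have Hf : forall y, y \in S -> forall j, (val x j != val y j) = (j == f y).
  move=> y; rewrite inE => /eqP /l1dist1 [i Hi] j.
  rewrite /f; case: pickP => [k Hk|H].
    by rewrite Hi in Hk; rewrite /= (eqP Hk) Hi.
  by have := H i; rewrite Hi eqxx.
apply: (@leq_trans #|'I_n.+1|); last by rewrite card_ord.
apply: (@leq_card_in _ _ f) => y1 y2 H1 H2 E12.
apply: val_inj; apply/ffunP => j.
have h1 := Hf _ H1 j; have h2 := Hf _ H2 j; rewrite -E12 in h2.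
case: (j == f y1) in h1 h2.
  by move: h1 h2; case: (val x j); case: (val y1 j); case: (val y2 j).
by move: h1 h2; case: (val x j); case: (val y1 j); case: (val y2 j).
Qed.

Lemma l1dist_le n (x y : {ffun 'I_n -> bool}) : (l1dist x y <= n)%N.
Proof. by rewrite /l1dist; apply: leq_trans (max_card _) _; rewrite card_ord. Qed.

Section Kna.
Variables (n : nat) (a : 'I_n -> nat) (b : nat).
Notation Om := (Omega n a b).
Notation PK := (@P_Kna n a b).
Definition EK (x y : Om) : bool := l1dist (val x) (val y) == 1%N.
Implicit Types x y v u : Om.
Notation K x := (INR (nbr_Kna_card x)).

Lemma EK_sym x y : EK x y = EK y x.
Proof. by rewrite /EK l1dist_sym. Qed.

Lemma EK_n x y : EK x y -> 1 <= INR n.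
Proof.
rewrite /EK => /eqP H; have := l1dist_le (val x) (val y); rewrite H => Hn.
have := le_INR _ _ (elimT leP Hn); simpl INR; lra.
Qed.

Lemma EK_ind x c : rsum (fun y => if EK x y then c else 0) = K x * c.
Proof.
rewrite rsum_ind /nbr_Kna_card; congr (INR _ * c).
by apply: eq_card => y; rewrite inE.
Qed.

Lemma K_le x : K x <= INR n.
Proof. apply le_INR; apply/leP; exact: card_nbr. Qed.

Lemma K_div x : K x / (2 * INR n) <= / 2.
Proof.
case: (posnP n) => [Hn|Hn].
  have Hn0 : INR n = 0 by rewrite Hn.
  have : K x = 0 by have := K_le x; have := pos_INR (nbr_Kna_card x); lra.
  move=> ->; rewrite /Rdiv Rmult_0_l; lra.
have Hn' : 0 < INR n by apply lt_0_INR; apply/ltP.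
apply mul_le_div; first lra.
have := K_le x; lra.
Qed.

Lemma PK_E x y : EK x y -> PK x y = / (2 * INR n).
Proof. by rewrite /P_Kna /EK => ->. Qed.

Lemma PK_diag x : PK x x = 1 - K x / (2 * INR n).
Proof. by rewrite /P_Kna l1dist_self eqxx. Qed.

Lemma PK_ge0 x y : 0 <= PK x y.
Proof.
case HE: (EK x y).
  rewrite PK_E //; have := EK_n HE => Hn.
  apply Rlt_le, Rinv_0_lt_compat; lra.
rewrite /P_Kna; move: HE; rewrite /EK => /negbT /negbTE ->.
case: eqP => [_|_]; last lra.
have := K_div x; lra.
Qed.

Lemma PK_split x y : PK x y = (if EK x y then / (2 * INR n) else 0) + (if y == x then 1 - K x / (2 * INR n) else 0).
Proof.
case HE: (EK x y).
  rewrite PK_E //; case: eqP => [E|_]; last lra.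
  by move: HE; rewrite E /EK l1dist_self.
rewrite /P_Kna; move: HE; rewrite /EK => /negbT /negbTE ->.
rewrite eq_sym; case: eqP => [<-|_]; lra.
Qed.

Lemma PK_row x : rsum (PK x) = 1.
Proof.
rewrite (rsum_ext (g := fun y => (if EK x y then / (2 * INR n) else 0) + (if y == x then 1 - K x / (2 * INR n) else 0))); last exact: PK_split.
rewrite rsum_add EK_ind rsum_delta /Rdiv; ring.
Qed.

Lemma PK_sym x y : PK x y = PK y x.
Proof.
rewrite /P_Kna l1dist_sym; case: (_ == 1%N) => //.
case: eqP => [->|H]; first by rewrite eqxx.
by case: eqP => // E; rewrite E in H.
Qed.

Lemma nonEK x y : y != x -> ~~ EK x y -> PK x y = 0.
Proof. by move=> H1 H2; rewrite PK_split (negbTE H2) (negbTE H1); ring. Qed.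

Lemma EK_deg x : rsum (fun y => if EK x y then 1 else 0) <= INR n.
Proof. rewrite EK_ind Rmult_1_r; exact: K_le. Qed.

Lemma Kdeg_le x : Kdeg PK x <= 1 + K x.
Proof.
apply: Rle_trans (_ : Kdeg PK x <= rsum (fun y => (if y == x then 1 else 0) + (if EK x y then 1 else 0))) _; last first.
  rewrite rsum_add (rsum_delta x (fun _ => 1)) EK_ind; lra.
apply rsum_le => y.
case: (eqVneq y x) => [->|Hyx].
  destruct (Rlt_dec 0 (PK x x)); case: (EK x x); simpl; lra.
case HE: (EK x y); first by destruct (Rlt_dec 0 (PK x y)); simpl; lra.
rewrite nonEK ?HE //; destruct (Rlt_dec 0 0); simpl; lra.
Qed.

Lemma Xb_K (sigma : Om -> nat -> Om) :
  is_SRT_router PK sigma \/ is_billiard_router PK sigma ->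
  forall v u z, EK v u -> Rabs (X PK sigma v u z) <= 1.
Proof.
move=> Hr v u z HE; rewrite /X.
case: Hr => Hr.
  have Hl := lower PK_ge0 PK_row (fun z m u => @srt_HC _ _ PK_ge0 _ Hr v z m u) z u.
  have Hu := srt_upper PK_ge0 Hr v u z.
  apply Rabs_le; lra.
have Hl := lower PK_ge0 PK_row (fun z m u => @bill_HC _ _ PK_ge0 _ Hr v z m u) z u.
have Hu := bill_upper PK_ge0 PK_row Hr v u z.
have Hn := EK_n HE.
have : (Kdeg PK v - 1) * PK v u <= 1.
  rewrite PK_E //.
  have := Kdeg_le v; have := K_le v; have := K_div v.
  have := Rinv_0_lt_compat (2 * INR n) ltac:(lra).
  rewrite /Rdiv; nra.
move=> h; apply Rabs_le; lra.
Qed.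

End Kna.

Lemma dist_mono (V : finType) (P : V -> V -> R) :
  (forall v u, 0 <= P v u) -> (forall v, rsum (P v) = 1) -> (forall v u, P v u = P u v) ->
  forall c t j x,
  rsum (fun u => Rabs (Ppow P (t + j) x u - c)) <= rsum (fun u => Rabs (Ppow P t x u - c)).
Proof.
move=> Hge Hrow Hsym c t j x.
rewrite (rsum_ext (g := fun u => Rabs (rsum (fun y => (Ppow P t x y - c) * Ppow P j y u)))).
  exact: contract.
move=> u; congr Rabs.
rewrite (rsum_ext (g := fun y => Ppow P t x y * Ppow P j y u - c * Ppow P j y u)); last by move=> y; ring.
rewrite rsum_sub rsum_scal (Ppow_col Hrow Hsym) Ppow_CK; ring.
Qed.

Lemma mix_N n a b (B : R) (w : Omega n a b) :
  mixing_time_le (@P_Kna n a b) (@unif_Kna n a b) (/ 4) B ->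
  exists N : nat, (0 < N)%N /\ INR N <= B + 2 /\
    forall x, rsum (fun u => Rabs (Ppow (@P_Kna n a b) N x u - / INR #|Omega n a b|)) <= / 2.
Proof.
move=> Hm.
have HB : 0 <= B by case: (Hm w) => t [Ht _]; have := pos_INR t; lra.
have [Hup1 Hup2] := archimed B.
have Hz : (0 <= up B)%Z by apply le_IZR; lra.
set N0 := Z.to_nat (up B).
have HN0 : INR N0 = IZR (up B) by rewrite /N0 INR_IZR_INZ Znat.Z2Nat.id.
exists (maxn N0 1); split; first by rewrite leq_max orbT.
split.
  have Hle : (maxn N0 1 <= N0 + 1)%N by lia.
  have := le_INR _ _ (elimT leP Hle); rewrite plus_INR HN0 /=; lra.
move=> x.
case: (Hm x) => t [Ht Hd].
have Htle : (t <= maxn N0 1)%N.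
  have : (t < N0)%N by apply/ltP; apply INR_lt; lra.
  lia.
rewrite -(subnKC Htle).
apply: Rle_trans (dist_mono (@PK_ge0 n a b) (@PK_row n a b) (@PK_sym n a b) _ _ _ _) _.
move: Hd; rewrite /dTV /unif_Kna; lra.
Qed.

Unset Implicit Arguments.

Theorem theorem6p2 :
  (* Morris--Sinclair mixing bound (assumption) *)
  (forall alpha : R, (0 < alpha) ->
     exists C : R,
       forall (n : nat) (a : 'I_n -> nat) (b : nat),
         (forall i, 0 < a i)%N -> (0 < b)%N ->
         mixing_time_le (@P_Kna n a b) (@unif_Kna n a b) (/ 4)
           (C * Rpower (INR n) (9 / 2 + alpha))) ->
  forall alpha : R, (0 < alpha) ->
    exists C' : R,
      forall (n : nat) (a : 'I_n -> nat) (b : nat),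
        (forall i, 0 < a i)%N -> (0 < b)%N ->
        forall (sigma : Omega n a b -> nat -> Omega n a b)
               (chi0 : Omega n a b -> nat),
          (is_SRT_router (@P_Kna n a b) sigma \/ is_billiard_router (@P_Kna n a b) sigma) ->
          forall (w : Omega n a b) (T : nat),
            (Rabs (INR (chi sigma chi0 T w) - mu (@P_Kna n a b) chi0 T w)
               <= C' * Rpower (INR n) (11 / 2 + alpha)).
Proof.
move=> Hms alpha Ha.
case: (Hms alpha Ha) => C HC.
exists (18 + 8 * Rabs C) => n a b Ha0 Hb0 sigma chi0 Hr w T.
set R9 := Rpower (INR n) (9 / 2 + alpha).
have [N [HN1 [HN2 HN3]]] := mix_N w (HC n a b Ha0 Hb0).
have Hnbr : forall v j, 0 < P_Kna v (sigma v j).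
  by case: Hr => Hr; [exact: srt_nbr | exact: bill_nbr].
have Hmain := main_bound (@PK_ge0 n a b) (@PK_row n a b) (@PK_sym n a b) Hnbr chi0
  (@EK_sym n a b) (@EK_deg n a b) (@nonEK n a b) (Xb_K Hr) HN1 HN3 T w (pos_INR n).
apply: Rle_trans Hmain _.
have HC0 : 0 <= 18 + 8 * Rabs C by have := Rabs_pos C; lra.
case: (posnP n) => Hn.
  have -> : INR n = 0 by rewrite Hn.
  rewrite Rmult_0_r Rmult_0_l.
  apply Rmult_le_pos => //; rewrite /Rpower; apply Rlt_le, exp_pos.
have Hn1 : 1 <= INR n by have := le_INR 1 n (elimT leP Hn); simpl INR; lra.
have HR9 : 1 <= R9.
  rewrite /R9 -(Rpower_O (INR n)); last lra.
  apply Rle_Rpower => //; lra.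
have -> : Rpower (INR n) (11 / 2 + alpha) = INR n * R9.
  rewrite /R9 (_ : 11 / 2 + alpha = 1 + (9 / 2 + alpha)); last by field.
  by rewrite Rpower_plus Rpower_1 //; lra.
have HB : C * R9 <= Rabs C * R9.
  apply Rmult_le_compat_r; [lra | exact: Rle_abs].
have h1 : 1 + 4 * INR N <= (9 + 4 * Rabs C) * R9.
  have := Rabs_pos C; rewrite -/R9 in HN2; nra.
have := Rmult_le_compat_l (2 * INR n) _ _ ltac:(lra) h1.
lra.
Qed.
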